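(* Let $\mathcal F$ be an $F$-category, $\mathcal C=\mathcal F^{(0)}$ its full subcategory of connected objects, $\jmath:\mathcal C\hookrightarrow\mathcal F$ the inclusion, and $J$ a Grothendieck topology on $\mathcal C$. A presheaf of sets $G$ on $\mathcal F$ is a sheaf for $\jmath_*J$ if and only if (a) its restriction to $\mathcal C$ is a $J$-sheaf, (b) $G(\emptyset)$ is a one-point set for an initial object $\emptyset$, and (c) for every finite family $(N_i)_{i\in I}$ of objects, the maps induced by the coprojections give a bijection $G(\coprod_i N_i)\to\prod_i G(N_i)$.
   Context: An object $Y$ of a category with initial object and finite coproducts is connected if for every finite family $(N_i)_{i\in I}$ the natural map $\coprod_i\operatorname{Hom}(Y,N_i)\to\operatorname{Hom}(Y,\coprod_iN_i)$ is bijective. An $F$-category is a category having an initial object and finite coproducts in which every object is isomorphic to a finite coproduct of connected objects. For a functor $F:\mathcal C\to\mathcal D$ and a topology $J$ on $\mathcal C$, the pushforward topology $F_*J$ on $\mathcal D$ is the finest topology making $F$ cocontinuous; explicitly, a sieve $R$ on $X\in\mathcal D$ is $F_*J$-covering iff for every object $Y$ of $\mathcal C$ and every morphism $f:F(Y)\to X$, the sieve $\{g:Z\to Y : f\circ F(g)\in R\}$ on $Y$ belongs to $J(Y)$. *)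

(* Defs.v *)
From mathcomp Require Import all_boot.
Set Implicit Arguments.
Unset Strict Implicit.
Unset Printing Implicit Defensive.

Record Category := {
  Obj :> Type;
  Hom : Obj -> Obj -> Type;
  idm : forall X, Hom X X;
  comp : forall X Y Z, Hom Y Z -> Hom X Y -> Hom X Z;
  comp_idl : forall X Y (f : Hom X Y), comp (idm Y) f = f;
  comp_idr : forall X Y (f : Hom X Y), comp f (idm X) = f;
  comp_assoc : forall X Y Z W (h : Hom Z W) (g : Hom Y Z) (f : Hom X Y),
      comp h (comp g f) = comp (comp h g) f
}.
Arguments Hom {c}.
Arguments idm {c}.
Arguments comp {c X Y Z}.

Record Functor (C D : Category) := {
  fobj :> C -> D;
  fmap : forall X Y : C, Hom X Y -> Hom (fobj X) (fobj Y);
  fmap_id : forall X, fmap (idm X) = idm (fobj X);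
  fmap_comp : forall X Y Z (g : Hom Y Z) (f : Hom X Y),
      fmap (comp g f) = comp (fmap g) (fmap f)
}.
Arguments fmap {C D} f {X Y} : rename.

Definition full_subcat (C : Category) (P : C -> Prop) : Category :=
  {| Obj := {X : C | P X};
     Hom := fun X Y => Hom (proj1_sig X) (proj1_sig Y);
     idm := fun X => idm (proj1_sig X);
     comp := fun X Y Z g f => comp g f;
     comp_idl := fun X Y f => comp_idl f;
     comp_idr := fun X Y f => comp_idr f;
     comp_assoc := fun X Y Z W h g f => comp_assoc h g f |}.

Definition incl_functor (C : Category) (P : C -> Prop) :
  Functor (full_subcat P) C :=
  {| fobj := fun X : full_subcat P => proj1_sig X;
     fmap := fun (X Y : full_subcat P) (f : Hom X Y) => f;
     fmap_id := fun X => erefl;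
     fmap_comp := fun X Y Z g f => erefl |}.

Record Presheaf (C : Category) := {
  pobj :> C -> Type;
  psh_map : forall X Y : C, Hom X Y -> pobj Y -> pobj X;
  psh_map_id : forall X (x : pobj X), psh_map (idm X) x = x;
  psh_map_comp : forall X Y Z (g : Hom Y Z) (f : Hom X Y) (x : pobj Z),
      psh_map (comp g f) x = psh_map f (psh_map g x)
}.
Arguments psh_map {C} p {X Y} : rename.

Definition presheaf_restrict (C D : Category) (F : Functor C D)
  (G : Presheaf D) : Presheaf C.
Proof.
refine {| pobj := fun X => G (F X);
          psh_map := fun X Y f x => psh_map G (fmap F f) x |}.
- by move=> X x; rewrite fmap_id psh_map_id.
- by move=> X Y Z g f x; rewrite fmap_comp psh_map_comp.
Defined.

Definition sieve_pred (C : Category) (X : C) := forall Y : C, Hom Y X -> Prop.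

Definition is_sieve (C : Category) (X : C) (S : sieve_pred X) : Prop :=
  forall Y Z (f : Hom Y X) (g : Hom Z Y), S Y f -> S Z (comp f g).

Definition maximal_sieve (C : Category) (X : C) : sieve_pred X :=
  fun _ _ => True.

Definition sieve_pullback (C : Category) (X Y : C) (S : sieve_pred X)
  (h : Hom Y X) : sieve_pred Y := fun Z g => S Z (comp h g).

Definition is_topology (C : Category) (J : forall X : C, sieve_pred X -> Prop)
  : Prop :=
  [/\ (forall X S, J X S -> is_sieve S),
      (forall X, J X (@maximal_sieve C X)),
      (forall X Y S (h : Hom Y X), J X S -> J Y (sieve_pullback S h)) &
      (forall X S R, J X S -> is_sieve R ->
          (forall Y (h : Hom Y X), S Y h -> J Y (sieve_pullback R h)) ->
          J X R)].

(* pushforward topology F_* J, by the explicit description *)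
Definition pushforward_top (C D : Category) (F : Functor C D)
  (J : forall X : C, sieve_pred X -> Prop) :
  forall X : D, sieve_pred X -> Prop :=
  fun X R => is_sieve R /\
    forall (Y : C) (f : Hom (F Y) X),
      J Y (fun Z (g : Hom Z Y) => R (F Z) (comp f (fmap F g))).

Definition is_sheaf (C : Category) (K : forall X : C, sieve_pred X -> Prop)
  (G : Presheaf C) : Prop :=
  forall (X : C) (S : sieve_pred X), K X S ->
  forall x : (forall Y (f : Hom Y X), S Y f -> G Y),
    (forall Y (f : Hom Y X) (hf : S Y f) Z (g : Hom Z Y)
            (hfg : S Z (comp f g)),
        x Z (comp f g) hfg = psh_map G g (x Y f hf)) ->
    exists a : G X,
      (forall Y (f : Hom Y X) (hf : S Y f), psh_map G f a = x Y f hf) /\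
      (forall b : G X,
         (forall Y (f : Hom Y X) (hf : S Y f), psh_map G f b = x Y f hf) ->
         b = a).

Definition is_initial (C : Category) (E : C) : Prop :=
  forall X : C, exists f : Hom E X, forall g : Hom E X, g = f.

Definition is_coproduct (C : Category) (I : finType) (N : I -> C) (S : C)
  (iota : forall i, Hom (N i) S) : Prop :=
  forall (X : C) (f : forall i, Hom (N i) X),
    exists h : Hom S X,
      (forall i, comp h (iota i) = f i) /\
      (forall h' : Hom S X, (forall i, comp h' (iota i) = f i) -> h' = h).

Definition has_initial (C : Category) : Prop := exists E : C, is_initial E.

Definition has_finite_coproducts (C : Category) : Prop :=
  forall (I : finType) (N : I -> C),
    exists (S : C) (iota : forall i, Hom (N i) S), is_coproduct iota.

Definition connected (C : Category) (Y : C) : Prop :=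
  forall (I : finType) (N : I -> C) (S : C) (iota : forall i, Hom (N i) S),
    is_coproduct iota ->
    bijective (fun p : {i : I & Hom Y (N i)} => comp (iota (projT1 p)) (projT2 p)).

Definition isomorphic (C : Category) (X Y : C) : Prop :=
  exists (f : Hom X Y) (g : Hom Y X), comp g f = idm X /\ comp f g = idm Y.

Definition is_Fcategory (C : Category) : Prop :=
  [/\ has_initial C, has_finite_coproducts C &
      forall X : C, exists (I : finType) (N : I -> C) (S : C)
                           (iota : forall i, Hom (N i) S),
        [/\ is_coproduct iota, forall i, connected (N i) & isomorphic S X]].

Definition connSub (C : Category) : Category := full_subcat (@connected C).
Definition connIncl (C : Category) : Functor (connSub C) C :=
  incl_functor (@connected C).

(* Main.v *)
Require Import Defs.
From mathcomp Require Import all_boot.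
From Stdlib Require Import ProofIrrelevance FunctionalExtensionality PropExtensionality IndefiniteDescription.
Set Implicit Arguments.
Unset Strict Implicit.
Unset Printing Implicit Defensive.

Notation CID := constructive_indefinite_description.
Notation comp := Defs.comp.

Lemma inj_surj_bij (A B : Type) (f : A -> B) :
  injective f -> (forall b, exists a, f a = b) -> bijective f.
Proof.
move=> fi fs.
exists (fun b => proj1_sig (CID _ (fs b))).
- move=> a; apply: fi; exact: (proj2_sig (CID _ (fs (f a)))).
- move=> b; exact: (proj2_sig (CID _ (fs b))).
Qed.

Lemma fam_eq (C : Category) (X : C) (S : sieve_pred X) (P : C -> Type)
  (x : forall Y (f : Hom Y X), S Y f -> P Y) Y (f f' : Hom Y X) hf hf' :
  f = f' -> x Y f hf = x Y f' hf'.
Proof. move=> e; subst f'; by rewrite (proof_irrelevance _ hf hf'). Qed.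

Lemma sheaf_sep (C : Category) (K : forall X : C, sieve_pred X -> Prop)
  (G : Presheaf C) (X : C) (R : sieve_pred X) :
  is_sheaf K G -> K X R -> forall u v : G X,
  (forall Y f, R Y f -> psh_map G f u = psh_map G f v) -> u = v.
Proof.
move=> Hs KR u v H.
have [a [ha ua]] := Hs X R KR (fun Y f _ => psh_map G f u)
  (fun Y f hf Z g hfg => psh_map_comp f g u).
rewrite (ua u) // (ua v) // => Y f hf; by rewrite H.
Qed.

Section Gen.
Variable F : Category.

Lemma conn_fact (Y : F) (I : finType) (N : I -> F) (S : F) (iota : forall i, Hom (N i) S) :
  connected Y -> is_coproduct iota -> forall h : Hom Y S,
  exists p : {i : I & Hom Y (N i)}, h = comp (iota (projT1 p)) (projT2 p).
Proof.
move=> cY cop h; have [g gK Kg] := cY I N S iota cop.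
by exists (g h); rewrite Kg.
Qed.

Lemma conn_inj (Y : F) (I : finType) (N : I -> F) (S : F) (iota : forall i, Hom (N i) S) :
  connected Y -> is_coproduct iota -> forall p q : {i : I & Hom Y (N i)},
  comp (iota (projT1 p)) (projT2 p) = comp (iota (projT1 q)) (projT2 q) -> p = q.
Proof.
move=> cY cop p q e; have [g gK Kg] := cY I N S iota cop.
exact: (can_inj gK).
Qed.

Lemma conn_not_init (Y E : F) : connected Y -> is_initial E -> Hom Y E -> False.
Proof.
move=> cY HE h.
pose N := fun v : void => match v return F with end.
pose iota := fun v : void => match v return Hom (N v) E with end.
have cop : is_coproduct iota.
  move=> X f; have [h0 hu] := HE X; exists h0; split; [by case|move=> h' _; exact: hu].
by have [[[]]] := conn_fact cY cop h.
Qed.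

Definition Dec := forall X : F, exists (I : finType) (N : I -> F) (S : F)
    (iota : forall i, Hom (N i) S),
    [/\ is_coproduct iota, forall i, connected (N i) & isomorphic S X].

Definition InjC (G : Presheaf F) := forall (I : finType) (N : I -> F) (S : F)
  (iota : forall i, Hom (N i) S), is_coproduct iota -> forall x y : G S,
  (forall i, psh_map G (iota i) x = psh_map G (iota i) y) -> x = y.

Lemma sep_conn (HD : Dec) (G : Presheaf F) (HI : InjC G) (Y : F) (u v : G Y) :
  (forall Z, connected Z -> forall h : Hom Z Y, psh_map G h u = psh_map G h v) -> u = v.
Proof.
move=> H; have [I [N [T [iota [cop conn [phi [psi [e1 e2]]]]]]]] := HD Y.
rewrite -(psh_map_id u) -(psh_map_id v) -e2 !psh_map_comp.
congr (psh_map G psi _).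
apply: (HI _ _ _ _ cop) => i; rewrite -!psh_map_comp; exact: H.
Qed.

End Gen.

Record rep (F : Category) (X : connSub F) (S : sieve_pred X) (Z : F) := Rep {
  rW : connSub F; rs : @Hom (connSub F) rW X; rk : Hom Z (proj1_sig rW);
  rS : S rW rs }.

Section Fwd.
Variable F : Category.
Hypothesis HD : Dec F.
Variable J : forall X : connSub F, sieve_pred X -> Prop.
Hypothesis HJ : is_topology J.
Variable G : Presheaf F.
Local Notation K X R := (@pushforward_top _ _ (connIncl F) J X R).
Local Notation KK := (pushforward_top (connIncl F) J).
Hypothesis Hs : is_sheaf KK G.

Definition Rcop (I : finType) (N : I -> F) (S : F) (iota : forall i, Hom (N i) S) :
  sieve_pred S := fun Z h => exists p : {i : I & Hom Z (N i)},
     h = comp (iota (projT1 p)) (projT2 p).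
Arguments Rcop {I N S} iota _ _.

Lemma KRcop (I : finType) (N : I -> F) (S : F) (iota : forall i, Hom (N i) S) :
  is_coproduct iota -> K S (Rcop iota).
Proof.
move=> cop; split.
  move=> Y Z f g [[i k] /= ->]; exists (existT _ i (comp k g)); by rewrite comp_assoc.
move=> Y f.
have [[i k] /= e] := conn_fact (proj2_sig Y) cop f.
suff -> : (fun Z (g : Hom Z Y) => Rcop iota (connIncl F Z) (comp f (fmap (connIncl F) g)))
   = @maximal_sieve _ Y by case: HJ.
apply: functional_extensionality_dep => Z; apply: functional_extensionality_dep => g.
apply: propositional_extensionality; split => // _.
exists (existT _ i (comp k g)); rewrite e /=; by rewrite comp_assoc.
Qed.

Lemma sheaf_inj : InjC G.
Proof.
move=> I N S iota cop x y H.
apply: (sheaf_sep Hs (KRcop cop)) => Z h [[i k] /= ->]; by rewrite !psh_map_comp H.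
Qed.

Lemma sheaf_init (E : F) : is_initial E -> exists x : G E, forall y, y = x.
Proof.
move=> HE.
have KR : K E (fun _ _ => False).
  split; first by move=> ?????.
  move=> Y f; exfalso; exact: (conn_not_init (proj2_sig Y) HE f).
have [a [_ ua]] := @Hs E _ KR (fun Y f (hf : False) => match hf with end)
   (fun Y f hf => match hf with end).
by exists a => y; apply: ua => ?? [].
Qed.

Lemma sheaf_bij (I : finType) (N : I -> F) (S : F) (iota : forall i, Hom (N i) S) :
  is_coproduct iota -> bijective (fun x : G S => fun i : I => psh_map G (iota i) x).
Proof.
move=> cop; apply: inj_surj_bij.
  move=> x y e; apply: (sheaf_inj cop) => i; exact: (congr1 (fun h => h i) e).
move=> y.
pose val Z (p : {i : I & Hom Z (N i)}) := psh_map G (projT2 p) (y (projT1 p)).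
have WD : forall Z (p q : {i : I & Hom Z (N i)}),
    comp (iota (projT1 p)) (projT2 p) = comp (iota (projT1 q)) (projT2 q) ->
    val Z p = val Z q.
  move=> Z p q e; apply: (sep_conn HD sheaf_inj) => W cW c.
  have E : existT _ (projT1 p) (comp (projT2 p) c) = existT (fun i => Hom W (N i)) (projT1 q) (comp (projT2 q) c).
    apply: (conn_inj cW cop) => /=; by rewrite !comp_assoc e.
  rewrite /val -!psh_map_comp; exact: (congr1 (val W) E).
pose xf Z h (hr : Rcop iota Z h) := val Z (proj1_sig (CID _ hr)).
have compat : forall Y (f : Hom Y S) (hf : Rcop iota Y f) Z (g : Hom Z Y)
    (hfg : Rcop iota Z (comp f g)), xf Z (comp f g) hfg = psh_map G g (xf Y f hf).
  move=> Y f hf Z g hfg; rewrite /xf.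
  case: (CID _ hf) => p ep; case: (CID _ hfg) => q eq /=.
  transitivity (val Z (existT _ (projT1 p) (comp (projT2 p) g))).
    apply: WD => /=; by rewrite -eq ep comp_assoc.
  by rewrite /val /= psh_map_comp.
have [s [hs _]] := @Hs S _ (KRcop cop) xf compat.
exists s; apply: functional_extensionality_dep => i.
have hr : Rcop iota (N i) (iota i).
  by exists (existT _ i (idm _)); rewrite /= comp_idr.
rewrite (hs _ _ hr) /xf; case: (CID _ _) => p ep /=.
transitivity (val _ (existT _ i (idm (N i)))).
  apply: WD; by rewrite -ep /= comp_idr.
by rewrite /val /= psh_map_id.
Qed.

Local Notation cF := (@Defs.comp F _ _ _).
Lemma sheaf_restr : is_sheaf J (presheaf_restrict (connIncl F) G).
Proof.
move=> X S JS x xc.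
have Ssv : is_sieve S by case: HJ => H _ _ _; exact: H _ _ JS.
pose val Z (r : rep S Z) : G Z := psh_map G (rk r) (x (rW r) (rs r) (rS r)).
have WD : forall Z (r r' : rep S Z), cF (rs r) (rk r) = cF (rs r') (rk r') ->
    val Z r = val Z r'.
  move=> Z r r' e; apply: (sep_conn HD sheaf_inj) => W cW c.
  pose Wc : connSub F := exist _ W cW.
  have h1 : forall r0 : rep S Z, psh_map G c (val Z r0) =
      x Wc (comp (rs r0) (comp (rk r0) c : @Hom (connSub F) Wc (rW r0))) (Ssv (rW r0) Wc (rs r0) (comp (rk r0) c : @Hom (connSub F) Wc (rW r0)) (rS r0)).
    move=> r0; rewrite /val -psh_map_comp; symmetry.
    exact (xc (rW r0) (rs r0) (rS r0) Wc (comp (rk r0) c : @Hom (connSub F) Wc (rW r0)) _).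
  rewrite !h1.
  have E : @Defs.comp (connSub F) _ _ _ (rs r) (cF (rk r) c : @Hom (connSub F) Wc (rW r))
      = @Defs.comp (connSub F) _ _ _ (rs r') (cF (rk r') c : @Hom (connSub F) Wc (rW r')).
    rewrite /=. rewrite !comp_assoc. exact: (congr1 (fun h => cF h c) e).
  exact (fam_eq x _ _ E).
pose R : sieve_pred (proj1_sig X) := fun Z h => exists r : rep S Z, h = cF (rs r) (rk r).
have KR : K _ R.
  split.
    move=> Y Z f g [r ->].
    exists (@Rep F X S Z (rW r) (rs r) (comp (rk r) g) (rS r)); by rewrite /= comp_assoc.
  move=> Y f.
  suff -> : (fun Z (g : Hom Z Y) => R (connIncl F Z) (comp f (fmap (connIncl F) g)))
     = sieve_pullback S f by case: HJ => _ _ H _; exact: H.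
  apply: functional_extensionality_dep => Z; apply: functional_extensionality_dep => g.
  apply: propositional_extensionality; split.
    move=> [r e]; rewrite /sieve_pullback /= e.
    exact: (Ssv _ Z (rs r) (rk r) (rS r)).
  move=> h; exists (@Rep F X S (proj1_sig Z) Z (comp f g) (idm _) h); by rewrite /= comp_idr.
pose xf Z h (hr : R Z h) := val Z (proj1_sig (CID _ hr)).
have compat : forall Y (f : Hom Y (proj1_sig X)) (hf : R Y f) Z (g : Hom Z Y)
    (hfg : R Z (comp f g)), xf Z (comp f g) hfg = psh_map G g (xf Y f hf).
  move=> Y f hf Z g hfg; rewrite /xf.
  case: (CID _ hf) => p ep; case: (CID _ hfg) => q eq /=.
  transitivity (val Z (@Rep F X S Z (rW p) (rs p) (comp (rk p) g) (rS p))).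
    apply: WD => /=; by rewrite -eq ep comp_assoc.
  by rewrite /val /= psh_map_comp.
have [a [ha ua]] := @Hs (proj1_sig X) R KR xf compat.
exists a; split.
  move=> Y f hf /=.
  have hr : R (proj1_sig Y) f.
    by exists (@Rep F X S (proj1_sig Y) Y f (idm _) hf); rewrite /= comp_idr.
  rewrite (ha _ _ hr) /xf; case: (CID _ _) => r er /=.
  transitivity (val _ (@Rep F X S (proj1_sig Y) Y f (idm _) hf)).
    apply: WD; by rewrite -er /= comp_idr.
  by rewrite /val /= psh_map_id.
move=> b hb; apply: ua => Z h hr; rewrite /xf; case: (CID _ _) => r er /=.
rewrite er /val psh_map_comp.
have := hb (rW r) (rs r) (rS r); rewrite /= => ->.
by [].
Qed.

End Fwd.

Section Bwd.
Variable F : Category.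
Hypothesis HD : Dec F.
Variable J : forall X : connSub F, sieve_pred X -> Prop.
Hypothesis HJ : is_topology J.
Variable G : Presheaf F.
Hypothesis Ha : is_sheaf J (presheaf_restrict (connIncl F) G).
Hypothesis Hc : forall (I : finType) (N : I -> F) (S : F) (iota : forall i, Hom (N i) S),
  is_coproduct iota -> bijective (fun x : G S => fun i : I => psh_map G (iota i) x).

Lemma sheaf_back : is_sheaf (pushforward_top (connIncl F) J) G.
Proof.
have HI : InjC G.
  move=> I N S iota cop x y H; have [g gK _] := Hc cop; apply: (can_inj gK).
  apply: functional_extensionality_dep => i; exact: H.
move=> X R [Rs HR] x xc.
have [I [N [T [iota [cop conn [phi [psi [e1 e2]]]]]]]] := HD X.
pose Ni i : connSub F := exist _ (N i) (conn i).
have Hai : forall i, exists ai : G (N i),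
   (forall (Y : connSub F) (f : Hom (proj1_sig Y) (N i))
      (hf : R (proj1_sig Y) (comp (comp phi (iota i)) f)), psh_map G f ai = x _ _ hf) /\
   (forall b : G (N i), (forall (Y : connSub F) (f : Hom (proj1_sig Y) (N i))
      (hf : R (proj1_sig Y) (comp (comp phi (iota i)) f)), psh_map G f b = x _ _ hf) -> b = ai).
  move=> i; have JS := HR (Ni i) (comp phi (iota i)).
  have compat : forall (Y : connSub F) (f : @Hom (connSub F) Y (Ni i))
      (hf : R (proj1_sig Y) (comp (comp phi (iota i)) f)) (Z : connSub F) (g : Hom Z Y)
      (hfg : R (proj1_sig Z) (comp (comp phi (iota i)) (comp f g))),
      x _ _ hfg = psh_map G g (x _ _ hf).
    move=> Y f hf Z g hfg.
    rewrite -(xc _ _ hf _ g (Rs _ _ _ g hf)).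
    apply: fam_eq; by rewrite comp_assoc.
  have [ai [h1 h2]] := @Ha (Ni i) _ JS (fun Y f hf => x _ _ hf) compat.
  by exists ai; split.
pose a i := proj1_sig (CID _ (Hai i)).
have [g gK Kg] := Hc cop.
pose s := g a.
have hs : forall i, psh_map G (iota i) s = a i.
  move=> i; exact: (congr1 (fun h => h i) (Kg a)).
have key : forall Z (cZ : connected Z) (h : Hom Z X) (hh : R Z h),
    psh_map G (comp psi h) s = x Z h hh.
  move=> Z cZ h hh; have [[i k] /= e] := conn_fact cZ cop (comp psi h).
  rewrite e psh_map_comp hs.
  have eh : comp (comp phi (iota i)) k = h.
    by rewrite -comp_assoc -e comp_assoc e2 comp_idl.
  have hk : R Z (comp (comp phi (iota i)) k) by rewrite eh.
  case: (proj2_sig (CID _ (Hai i))) => H1 _.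
  rewrite /a (H1 (exist _ Z cZ) k hk); apply: fam_eq; exact: eh.
exists (psh_map G psi s); split.
  move=> Y f hf; apply: (sep_conn HD HI) => Z cZ c.
  rewrite -!psh_map_comp -(xc Y f hf Z c (Rs _ _ _ c hf)).
  exact: key.
move=> b hb.
rewrite -[b]psh_map_id -e2 psh_map_comp; congr (psh_map G psi _).
apply: (HI _ _ _ _ cop) => i; rewrite hs -psh_map_comp.
case: (proj2_sig (CID _ (Hai i))) => _ H2.
apply: H2 => Y f hf; rewrite -psh_map_comp; exact: hb.
Qed.

End Bwd.

Theorem mainTheorem12 (F : Category) (HF : is_Fcategory F)
  (J : forall X : connSub F, sieve_pred X -> Prop) (HJ : is_topology J)
  (G : Presheaf F) :
  is_sheaf (pushforward_top (connIncl F) J) G <->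
  [/\ is_sheaf J (presheaf_restrict (connIncl F) G),
      (forall E : F, is_initial E -> exists x : G E, forall y : G E, y = x) &
      (forall (I : finType) (N : I -> F) (S : F) (iota : forall i, Hom (N i) S),
         is_coproduct iota ->
         bijective (fun x : G S => fun i : I => psh_map G (iota i) x))].
Proof.
have HD : Dec F by case: HF.
split.
  move=> Hs; split.
  - exact (sheaf_restr HD HJ Hs).
  - exact: (sheaf_init Hs).
  - move=> I N S iota cop; exact: (sheaf_bij HD HJ Hs cop).
case=> Ha _ Hc; exact (sheaf_back HD Ha Hc).
Qed.
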